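(* Let $N \geq 1$ and let $\mu$ be the uniform probability measure on the hypercube $\{0,1\}^N$. Let $\nu$ be any probability measure on $\{0,1\}^N$ satisfying $I(\nu|\mu) \geq 4W_1(\nu,\mu)$. Then $$H(\nu|\mu) \leq 2\sqrt{W_1(\nu,\mu)\, I(\nu|\mu)} - 2W_1(\nu,\mu).$$
   Context: For $x \in \{0,1\}^N$ and $i \in \{1,\dots,N\}$, $x^i$ denotes the configuration obtained from $x$ by flipping its $i$-th coordinate. Let $\rho = d\nu/d\mu$. The relative entropy is $H(\nu|\mu) = \sum_{x} \rho(x)\log\rho(x)\,\mu(x)$ (with $0\log 0 = 0$). The discrete (modified) Fisher information is $$I(\nu|\mu) = \frac{1}{2}\sum_{x\in\{0,1\}^N}\sum_{i=1}^N \big(\rho(x^i)-\rho(x)\big)\big(\log\rho(x^i)-\log\rho(x)\big)\mu(x),$$ with the value $+\infty$ if some term is infinite. The distance $W_1(\nu,\mu) = \inf \mathbb{E}[d(X,Y)]$, where the infimum is over all couplings of $X\sim\nu$ and $Y\sim\mu$, and $d$ is the Hamming distance on $\{0,1\}^N$. *)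

(* Defs.v *)
From HB Require Import structures.
From mathcomp Require Import all_boot all_order all_algebra.
From mathcomp Require Import all_classical all_reals all_analysis.
Unset Strict Implicit. Unset Printing Implicit Defensive.
Import Order.TTheory GRing.Theory Num.Theory.
Local Open Scope ring_scope.

Definition cube (N : nat) := {ffun 'I_N -> bool}.

Definition flip (N : nat) (x : cube N) (i : 'I_N) : cube N :=
  [ffun j => if j == i then ~~ x j else x j].

Definition hamming (N : nat) (x y : cube N) : nat := #|[set j | x j != y j]|.

Definition unif (R : realType) (N : nat) (x : cube N) : R := (2 ^+ N)^-1.

Definition is_prob (R : realType) (N : nat) (nu : cube N -> R) : Prop :=
  (forall x, 0 <= nu x) /\ \sum_(x : cube N) nu x = 1.

Definition dens (R : realType) (N : nat) (nu : cube N -> R) (x : cube N) : R :=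
  nu x / unif R N x.

Definition relH (R : realType) (N : nat) (nu : cube N -> R) : R :=
  \sum_(x : cube N)
     (if dens R N nu x == 0 then 0 else dens R N nu x * ln (dens R N nu x)) * unif R N x.

Definition fterm (R : realType) (a b : R) : \bar R :=
  if (a == 0) && (b == 0) then 0%E
  else if (a == 0) || (b == 0) then +oo%E
  else ((a - b) * (ln a - ln b))%:E.

Definition fisherI (R : realType) (N : nat) (nu : cube N -> R) : \bar R :=
  ((2%:R^-1)%:E *
   \sum_(x : cube N) \sum_(i < N)
      (fterm R (dens R N nu (flip N x i)) (dens R N nu x) * (unif R N x)%:E))%E.

Definition coupling (R : realType) (N : nat) (nu mu : cube N -> R)
  (pi : cube N * cube N -> R) : Prop :=
  (forall p, 0 <= pi p) /\
  (forall x, \sum_(y : cube N) pi (x, y) = nu x) /\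
  (forall y, \sum_(x : cube N) pi (x, y) = mu y).

Definition W1 (R : realType) (N : nat) (nu mu : cube N -> R) : R :=
  inf [set c : R | exists pi, coupling R N nu mu pi /\
        c = \sum_(p : cube N * cube N) pi p * (hamming N p.1 p.2)%:R].

(* Main.v *)
Require Import Defs.
Set Warnings "-all".
From HB Require Import structures.
From mathcomp Require Import all_boot all_order all_algebra.
From mathcomp Require Import all_classical all_reals all_analysis.
From mathcomp Require Import ring lra.
Import Order.TTheory GRing.Theory Num.Theory.
Local Open Scope ring_scope.

Section RealLemmas.
Variable R : realType.
Implicit Types a b A B y q : R.

Lemma ln_le_sub1 y : 0 < y -> ln y <= y - 1.
Proof.
move=> y0; have := @le_ln1Dx R (y - 1).
rewrite addrCA subrr addr0; apply; lra.
Qed.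

Lemma lnD_pos a b : 0 < a -> 0 < b -> ln (a / b) = ln a - ln b.
Proof. by move=> a0 b0; rewrite ln_div // posrE. Qed.

Lemma lnM_pos a b : 0 < a -> 0 < b -> ln (a * b) = ln a + ln b.
Proof. by move=> a0 b0; rewrite lnM // posrE. Qed.

Lemma key a b A B : 0 < a -> 0 < b -> 0 < A -> 0 < B ->
  a - b * A / B <= a * (ln a - ln b) - a * (ln A - ln B).
Proof.
move=> a0 b0 A0 B0.
have p1 : 0 < b * A by rewrite mulr_gt0.
have p2 : 0 < a * B by rewrite mulr_gt0.
have h := @ln_le_sub1 _ (divr_gt0 p1 p2).
rewrite lnD_pos // !lnM_pos // in h.
have h2 := ler_wpM2l (ltW a0) h.
have e : a * (b * A / (a * B) - 1) = b * A / B - a.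
  by field; rewrite ?gt_eqF.
rewrite e in h2.
set u := ln a; set v := ln b; set w := ln A; set z := ln B.
rewrite -/u -/v -/w -/z in h2.
have : a * (v + w - (u + z)) = - (a * (u - v) - a * (w - z)) by ring.
move=> e2; rewrite e2 in h2; lra.
Qed.

Arguments key {a b A B}.

Lemma key0 a b A B : 0 <= a -> 0 <= b -> (0 < a -> 0 < b) -> 0 < A -> 0 < B ->
  a - b * A / B <= a * (ln a - ln b) - a * (ln A - ln B).
Proof.
move=> a0 b0 ab A0 B0; have [a00|apos] := eqVneq a 0.
  rewrite a00 !mul0r subr0 sub0r oppr_le0.
  by rewrite mulr_ge0 // ?invr_ge0 ?mulr_ge0 // ltW.
have ap : 0 < a by rewrite lt_def apos.
by apply: key => //; apply: ab.
Qed.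

Arguments key0 {a b A B}.

Lemma xlog a b : 0 < a -> 0 < b -> a - b <= a * (ln a - ln b).
Proof.
move=> a0 b0; have := key a0 b0 b0 b0.
by rewrite subrr mulr0 subr0 mulrK // unitfE gt_eqF.
Qed.

Arguments xlog {a b}.

Definition Phi a b := (a - b) * (ln a - ln b).

Lemma Phi_ge0 a b : 0 < a -> 0 < b -> 0 <= Phi a b.
Proof.
move=> a0 b0; have h1 := xlog a0 b0; have h2 := xlog b0 a0.
have e : Phi a b = a * (ln a - ln b) + b * (ln b - ln a) by rewrite /Phi; ring.
rewrite e; lra.
Qed.

Lemma PhiC a b : Phi a b = Phi b a.
Proof. by rewrite /Phi; ring. Qed.

Lemma logsum (I : finType) (a b : I -> R) :
  (forall i, 0 <= a i) -> (forall i, 0 <= b i) -> (forall i, 0 < a i -> 0 < b i) ->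
  0 < \sum_i a i -> 0 < \sum_i b i ->
  (\sum_i a i) * (ln (\sum_i a i) - ln (\sum_i b i)) <=
  \sum_i a i * (ln (a i) - ln (b i)).
Proof.
move=> a0 b0 ab A0 B0; set A := \sum_i a i; set B := \sum_i b i.
have h : \sum_i (a i - b i * A / B) <=
         \sum_i (a i * (ln (a i) - ln (b i)) - a i * (ln A - ln B)).
  apply: ler_sum => i _; exact: (key0 (a0 i) (b0 i) (ab i) A0 B0).
rewrite !sumrB -!mulr_suml -/A -/B in h.
have e : B * A / B = A by rewrite [B * A]mulrC mulfK // gt_eqF.
rewrite e subrr in h; lra.
Qed.

Lemma Phi_convex q a b a' b' : 0 < q < 1 -> 0 < a -> 0 < b -> 0 < a' -> 0 < b' ->
  Phi (q * a + (1 - q) * a') (q * b + (1 - q) * b') <= q * Phi a b + (1 - q) * Phi a' b'.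
Proof.
move=> /andP[q0 q1] a0 b0 a'0 b'0.
have q'0 : 0 < 1 - q by lra.
set A := q * a + (1 - q) * a'; set B := q * b + (1 - q) * b'.
have A0 : 0 < A by rewrite /A addr_gt0 // mulr_gt0.
have B0 : 0 < B by rewrite /B addr_gt0 // mulr_gt0.
have h1 := ler_wpM2l (ltW q0) (key a0 b0 A0 B0).
have h2 := ler_wpM2l (ltW q'0) (key a'0 b'0 A0 B0).
have h3 := ler_wpM2l (ltW q0) (key b0 a0 B0 A0).
have h4 := ler_wpM2l (ltW q'0) (key b'0 a'0 B0 A0).
have e1 : q * (a - b * A / B) + (1 - q) * (a' - b' * A / B) = 0.
  rewrite /A /B; field; rewrite -/B gt_eqF //.
have e2 : q * (b - a * B / A) + (1 - q) * (b' - a' * B / A) = 0.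
  rewrite /A /B; field; rewrite -/A gt_eqF //.
rewrite /Phi.
set la := ln a; set lb := ln b; set la' := ln a'; set lb' := ln b'; set lA := ln A; set lB := ln B.
rewrite -/la -/lb -/la' -/lb' -/lA -/lB in h1 h2 h3 h4.
set X1 := q * (a - b * A / B); set X2 := (1 - q) * (a' - b' * A / B).
set X3 := q * (b - a * B / A); set X4 := (1 - q) * (b' - a' * B / A).
rewrite -/X1 -/X2 -/X3 -/X4 in h1 h2 h3 h4 e1 e2.
have E : (A - B) * (lA - lB) = - (q * (a * (la - lb) - a * (lA - lB)) + (1 - q) * (a' * (la' - lb') - a' * (lA - lB))
   + q * (b * (lb - la) - b * (lB - lA)) + (1 - q) * (b' * (lb' - la') - b' * (lB - lA)))
   + (q * ((a - b) * (la - lb)) + (1 - q) * ((a' - b') * (la' - lb'))).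
  rewrite /A /B; ring.
rewrite E; lra.
Qed.

End RealLemmas.
Arguments Phi {R}.
Arguments key {R a b A B}.
Arguments key0 {R a b A B}.
Arguments xlog {R a b}.
Arguments ln_le_sub1 {R y}.

Section Cube.
Variable R : realType.
Variable N : nat.
Local Notation cb := {ffun 'I_N -> bool}.

Definition flipn (x : cb) (k : nat) : cb :=
  [ffun j : 'I_N => if val j == k then ~~ x j else x j].

Lemma flipnK k : involutive (flipn ^~ k).
Proof.
by move=> x; apply/ffunP => j; rewrite !ffunE; case: (val j == k) => //; rewrite negbK.
Qed.

Lemma flipnC x k l : flipn (flipn x k) l = flipn (flipn x l) k.
Proof.
apply/ffunP => j; rewrite !ffunE.
by case: (val j == k); case: (val j == l).
Qed.

Lemma sum_flip k (F : cb -> R) : \sum_x F (flipn x k) = \sum_x F x.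
Proof. by rewrite [RHS](reindex_inj (inv_inj (flipnK k))). Qed.

Lemma const_flip (P : cb -> bool) :
  (forall x k, P (flipn x k) = P x) -> forall x y, P x = P y.
Proof.
move=> HP x y.
move: {2}#|[set j | x j != y j]| (erefl #|[set j | x j != y j]|) => n.
elim: n x => [|n IH] x Hn.
  suff -> : x = y by [].
  apply/ffunP => j; apply/eqP; apply: contraT => hj.
  have : j \in [set j | x j != y j] by rewrite inE.
  by move/card0_eq: Hn => ->; rewrite inE.
have : (0 < #|[set j | x j != y j]|)%N by rewrite Hn.
case/card_gt0P => i; rewrite inE => hi.
rewrite -(HP x i); apply: IH.
have -> : [set j | flipn x i j != y j] = [set j | x j != y j] :\ i.
  apply/setP => j; rewrite !inE !ffunE.
  case: (eqVneq j i) => [->|ji] /=.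
    by rewrite eqxx; move: hi; case: (x i); case: (y i).
  by have -> : (val j == val i) = false by apply/negbTE; rewrite val_eqE.
by move: Hn; rewrite (cardsD1 i) inE hi /= add1n => -[].
Qed.

Variable q : R.

Definition mix k (f : cb -> R) (x : cb) := q * f x + (1 - q) * f (flipn x k).

Fixpoint Fseq (f : cb -> R) k := if k is k'.+1 then mix k' (Fseq f k') else f.

Definition Ent (f : cb -> R) := \sum_x f x * ln (f x).
Definition Fi k (f : cb -> R) := \sum_x Phi (f (flipn x k)) (f x) / 2.

Hypothesis q01 : 0 < q < 1.

Lemma mix_pos k f : (forall x, 0 < f x) -> forall x, 0 < mix k f x.
Proof.
move: q01 => /andP[q0 q1] fp x; rewrite /mix addr_gt0 // mulr_gt0 //; lra.
Qed.

Lemma Fseq_pos f : (forall x, 0 < f x) -> forall k x, 0 < Fseq f k x.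
Proof. by move=> fp; elim=> [|k IH] x //=; apply: mix_pos. Qed.

Lemma Fi_mix i j f : (forall x, 0 < f x) -> Fi i (mix j f) <= Fi i f.
Proof.
move=> fp; rewrite /Fi -!mulr_suml ler_wpM2r ?invr_ge0 ?ler0n //.
have h : \sum_x Phi (mix j f (flipn x i)) (mix j f x) <=
  \sum_x (q * Phi (f (flipn x i)) (f x) + (1 - q) * Phi (f (flipn (flipn x j) i)) (f (flipn x j))).
  apply: ler_sum => x _; rewrite /mix [flipn (flipn x i) j]flipnC.
  by apply: Phi_convex.
apply: (le_trans h); rewrite big_split /= -!mulr_sumr.
rewrite (sum_flip j (fun x => Phi (f (flipn x i)) (f x))).
by rewrite -mulrDl addrCA subrr addr0 mul1r.
Qed.

Lemma Fi_Fseq i f : (forall x, 0 < f x) -> forall k, Fi i (Fseq f k) <= Fi i f.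
Proof.
move=> fp; elim=> [|k IH] //=.
by apply: le_trans IH; apply: Fi_mix; apply: Fseq_pos.
Qed.

Lemma Ent_mix k f : (forall x, 0 < f x) -> Ent f <= (1 - q) * Fi k f + Ent (mix k f).
Proof.
move=> fp; have gp := mix_pos k f fp.
rewrite -lerBlDr /Ent -sumrB.
have h : forall x, f x * ln (f x) - mix k f x * ln (mix k f x) <=
   (1 - q) * ((f x - f (flipn x k)) * ln (f x)) + (1 - q) * (f x - f (flipn x k)).
  move=> x; have H := xlog (gp x) (fp x).
  have eD : (1 - q) * (f x - f (flipn x k)) = f x - mix k f x by rewrite /mix; ring.
  rewrite mulrA eD.
  set g := mix k f x in H *; set u := ln g in H *; set v := ln (f x) in H *.
  set fx := f x in H *.
  have e : fx * v - g * u = (fx - g) * v + (fx - g) - (g * (u - v) - (g - fx)) by ring.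
  rewrite e; lra.
apply: (le_trans (ler_sum _ (fun x _ => h x))).
rewrite big_split /= -!mulr_sumr sumrB (sum_flip k f) subrr mulr0 addr0.
rewrite ler_wpM2l //; first by move: q01 => /andP[_ q1]; lra.
rewrite /Fi -mulr_suml.
set S := \sum_x _.
have e : S = \sum_x (f (flipn x k) - f x) * ln (f (flipn x k)).
  rewrite /S -(sum_flip k (fun x => (f x - f (flipn x k)) * ln (f x))) /=.
  by apply: eq_bigr => x _; rewrite flipnK.
have e2 : \sum_x Phi (f (flipn x k)) (f x) = S + S.
  rewrite {2}e -big_split /=; apply: eq_bigr => x _; rewrite /Phi; ring.
by rewrite e2; have -> : (S + S) / 2 = S by field.
Qed.

Lemma Ent_chain f : (forall x, 0 < f x) -> forall k,
  Ent f <= (1 - q) * \sum_(i < k) Fi i f + Ent (Fseq f k).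
Proof.
move=> fp; elim=> [|k IH]; first by rewrite big_ord0 mulr0 add0r.
apply: (le_trans IH); rewrite big_ord_recr /= mulrDr -addrA lerD2l.
apply: (le_trans (Ent_mix k (Fseq f k) (Fseq_pos f fp k))); rewrite lerD2r.
rewrite ler_wpM2l ?Fi_Fseq //; move: q01 => /andP[_ q1]; lra.
Qed.

End Cube.
Arguments flipn {N}.
Arguments mix {R N}.
Arguments Fseq {R N}.
Arguments Ent {R N}.
Arguments Fi {R N}.
Arguments flipnK {N}.
Arguments const_flip {N}.
Arguments Fseq_pos {R N q}.
Arguments Ent_chain {R N q}.
Arguments Fi_Fseq {R N q}.

Section Kernel.
Variable R : realType.
Variable N : nat.
Local Notation cb := {ffun 'I_N -> bool}.
Variable q : R.
Hypothesis q01 : 0 < q < 1.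

Definition cq (b : bool) : R := if b then q else 1 - q.

Lemma cq_pos b : 0 < cq b.
Proof. by move: q01 => /andP[q0 q1]; case: b => //=; lra. Qed.

Definition Kk k (z x : cb) : R :=
  \prod_(i < N) (if (i < k)%N then cq (z i == x i) else (z i == x i)%:R).

Lemma Kk_step k z x : Kk k.+1 z x = q * Kk k z x + (1 - q) * Kk k (flipn z k) x.
Proof.
case: (ltnP k N) => kN.
  set i0 := Ordinal kN.
  rewrite /Kk (bigD1 i0) //= [X in q * X](bigD1 i0) //= [X in (1 - q) * X](bigD1 i0) //=.
  have E1 : \prod_(i < N | i != i0) (if (i < k.+1)%N then cq (z i == x i) else (z i == x i)%:R)
    = \prod_(i < N | i != i0) (if (i < k)%N then cq (z i == x i) else (z i == x i)%:R).
    apply: eq_bigr => i hi; rewrite ltnS leq_eqVlt.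
    by have -> : (val i == k) = false by apply/negbTE; rewrite -val_eqE in hi.
  have E2 : \prod_(i < N | i != i0) (if (i < k)%N then cq (flipn z k i == x i) else (flipn z k i == x i)%:R)
    = \prod_(i < N | i != i0) (if (i < k)%N then cq (z i == x i) else (z i == x i)%:R).
    apply: eq_bigr => i hi; rewrite ffunE.
    by have -> : (val i == k) = false by apply/negbTE; rewrite -val_eqE in hi.
  rewrite E1 E2 ffunE /= eqxx ltnSn ltnn.
  by case: (z i0); case: (x i0) => /=; ring.
have E : forall z', Kk k.+1 z' x = Kk k z' x.
  move=> z'; apply: eq_bigr => i _.
  have h1 : (i < k)%N by apply: leq_trans (ltn_ord i) kN.
  by rewrite h1 ltnS ltnW.
have -> : flipn z k = z.
  apply/ffunP => j; rewrite ffunE.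
  by have -> : (val j == k) = false by apply/negbTE; rewrite neq_ltn (leq_trans (ltn_ord j) kN).
rewrite E; ring.
Qed.

Lemma Kk0 z x : Kk 0%N z x = (z == x)%:R.
Proof.
rewrite /Kk.
case: (eqVneq z x) => [->|zx].
  by rewrite big1 // => i _; rewrite eqxx.
case: (boolP [exists i, z i != x i]) => [/existsP[i hi]|/existsPn H].
  apply/eqP; apply/prodf_eq0; exists i => //.
  by rewrite (negbTE hi).
exfalso; move/eqP: zx; apply; apply/ffunP => i.
by have := H i; rewrite negbK => /eqP.
Qed.

Lemma Fseq_K f k z : Fseq q f k z = \sum_x Kk k z x * f x.
Proof.
elim: k z => [|k IH] z /=.
  rewrite (bigD1 z) //= Kk0 eqxx mul1r big1 ?addr0 // => x hx.
  by rewrite Kk0 eq_sym (negbTE hx) mul0r.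
rewrite /mix !IH !mulr_sumr -big_split /=; apply: eq_bigr => x _.
by rewrite Kk_step; ring.
Qed.

Lemma KkN z x : Kk N z x = \prod_i cq (z i == x i).
Proof. by apply: eq_bigr => i _; rewrite ltn_ord. Qed.

Lemma K_pos z x : 0 < Kk N z x.
Proof. by rewrite KkN prodr_gt0 // => i _; apply: cq_pos. Qed.

Lemma sum_prod_fun (G : 'I_N -> bool -> R) i (h : bool -> R) :
  \sum_(x : cb) (\prod_j G j (x j)) * h (x i) =
  (\sum_b G i b * h b) * \prod_(j | j != i) \sum_b G j b.
Proof.
pose G' j b := G j b * (if j == i then h b else 1).
have e : forall x : cb, (\prod_j G j (x j)) * h (x i) = \prod_j G' j (x j).
  move=> x; rewrite /G' big_split /= -big_mkcond /= big_pred1_eq //.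
rewrite (eq_bigr _ (fun x _ => e x)).
rewrite -(bigA_distr_bigA G') (bigD1 i) //=; congr (_ * _).
  by apply: eq_bigr => b _; rewrite /G' eqxx.
apply: eq_bigr => j hj; apply: eq_bigr => b _; rewrite /G' (negbTE hj) mulr1 //.
Qed.

Lemma K_sum z : \sum_x Kk N z x = 1.
Proof.
rewrite (eq_bigr (fun x : cb => \prod_i (fun j b => cq (z j == b)) i (x i))); last first.
  by move=> x _; rewrite KkN.
rewrite -(bigA_distr_bigA (fun j b => cq (z j == b))) big1 // => i _.
by rewrite big_bool /=; case: (z i) => /=; ring.
Qed.

Lemma ln_prod (F : 'I_N -> R) : (forall i, 0 < F i) ->
  ln (\prod_i F i) = \sum_i ln (F i).
Proof.
move=> Fp.
have : 0 < \prod_i F i /\ ln (\prod_i F i) = \sum_i ln (F i).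
  apply: (big_ind2 (fun a b => 0 < a /\ ln a = b)).
  - by rewrite ltr01 ln1.
  - move=> a1 a2 b1 b2 [h1 e1] [h2 e2]; split; first by rewrite mulr_gt0.
    by rewrite lnM_pos // e1 e2.
  - by move=> i _; split.
by case.
Qed.

Lemma cross x y : \sum_z Kk N z x * (ln (Kk N z x) - ln (Kk N z y)) =
  (2 * q - 1) * (ln q - ln (1 - q)) * (hamming N x y)%:R.
Proof.
set c := (2 * q - 1) * (ln q - ln (1 - q)).
have e1 : forall z, ln (Kk N z x) - ln (Kk N z y) =
    \sum_i (ln (cq (z i == x i)) - ln (cq (z i == y i))).
  by move=> z; rewrite !KkN !ln_prod ?sumrB // => i; apply: cq_pos.
under eq_bigr do rewrite e1 mulr_sumr.
rewrite exchange_big /=.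
have e2 : forall i, \sum_(z : cb) Kk N z x * (ln (cq (z i == x i)) - ln (cq (z i == y i)))
   = (x i != y i)%:R * c.
  move=> i.
  have := sum_prod_fun (fun j b => cq (b == x j)) i
     (fun b => ln (cq (b == x i)) - ln (cq (b == y i))).
  move=> /= H.
  rewrite (eq_bigr (fun z : cb => (\prod_j cq (z j == x j)) * (ln (cq (z i == x i)) - ln (cq (z i == y i))))); last first.
    by move=> z _; rewrite KkN.
  rewrite H [X in _ * X]big1 ?mulr1; last first.
    by move=> j _; rewrite big_bool /=; case: (x j) => /=; ring.
  rewrite big_bool /= /c; case: (x i); case: (y i) => /=; rewrite ?subrr; ring.
under eq_bigr do rewrite e2.
rewrite /hamming -mulr_natr -sumr_const mul1r mulr_sumr [RHS]big_mkcond /=.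
by apply: eq_bigr => i _; rewrite inE; case: (x i != y i) => /=; ring.
Qed.

End Kernel.
Arguments Kk {R N}.
Arguments cross {R N q}.
Arguments K_pos {R N q}.
Arguments K_sum {R N q}.
Arguments Fseq_K {R N q}.
Arguments lnM_pos {R}.
Arguments lnD_pos {R}.

Lemma W_part (R : realType) (N : nat) (q m : R) (rho : cube N -> R)
  (pi : cube N * cube N -> R) :
  0 < q < 1 -> 0 < m -> (forall x, 0 < rho x) -> (forall p, 0 <= pi p) ->
  (forall x, \sum_y pi (x, y) = m * rho x) -> (forall y, \sum_x pi (x, y) = m) ->
  m * Ent (Fseq q rho N) <=
  (2 * q - 1) * (ln q - ln (1 - q)) * \sum_p pi p * (hamming N p.1 p.2)%:R.
Proof.
move=> q01 m0 rp pp h1 h2.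
set F := Fseq q rho N.
have Fp : forall z, 0 < F z := Fseq_pos q01 rho rp N.
pose a z (p : cube N * cube N) := pi p * Kk q N z p.1.
pose b z (p : cube N * cube N) := pi p * Kk q N z p.2.
have sumA : forall z, \sum_p a z p = m * F z.
  move=> z; rewrite /F Fseq_K mulr_sumr.
  rewrite (eq_bigr (fun p : cube N * cube N => (fun x y => pi (x, y) * Kk q N z x) p.1 p.2)); last first.
    by move=> -[x y] _.
  rewrite -(pair_bigA _ (fun x y => pi (x, y) * Kk q N z x)) /=; apply: eq_bigr => x _.
  by rewrite -mulr_suml h1; ring.
have sumB : forall z, \sum_p b z p = m.
  move=> z.
  rewrite (eq_bigr (fun p : cube N * cube N => (fun x y => pi (x, y) * Kk q N z y) p.1 p.2)); last first.
    by move=> -[x y] _.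
  rewrite -(pair_bigA _ (fun x y => pi (x, y) * Kk q N z y)) /= exchange_big /=.
  rewrite (eq_bigr (fun y => m * Kk q N z y)); last first.
    by move=> y _; rewrite -mulr_suml h2.
  by rewrite -mulr_sumr K_sum mulr1.
have step1 : m * Ent F = \sum_z (\sum_p a z p) * (ln (\sum_p a z p) - ln (\sum_p b z p)).
  rewrite /Ent mulr_sumr; apply: eq_bigr => z _.
  rewrite sumA sumB lnM_pos //; ring.
have step2 : m * Ent F <= \sum_z \sum_p a z p * (ln (a z p) - ln (b z p)).
  rewrite step1; apply: ler_sum => z _; apply: logsum.
  - by move=> p; rewrite /a mulr_ge0 // ltW // (K_pos q01).
  - by move=> p; rewrite /b mulr_ge0 // ltW // (K_pos q01).
  - move=> p; rewrite /a /b => H.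
    have pip : 0 < pi p.
      rewrite lt_def pp andbT; apply/negP => /eqP e; move: H; rewrite e mul0r ltxx //.
    by rewrite mulr_gt0 // (K_pos q01).
  - by rewrite sumA mulr_gt0.
  - by rewrite sumB.
apply: (le_trans step2).
have step3 : forall z p, a z p * (ln (a z p) - ln (b z p)) =
   pi p * (Kk q N z p.1 * (ln (Kk q N z p.1) - ln (Kk q N z p.2))).
  move=> z p; rewrite /a /b.
  have [e|ne] := eqVneq (pi p) 0; first by rewrite e !mul0r.
  have pip : 0 < pi p by rewrite lt_def ne pp.
  rewrite !lnM_pos // ?K_pos //; ring.
under eq_bigr do under eq_bigr do rewrite step3.
rewrite exchange_big /= mulr_sumr; apply: ler_sum => p _.
by rewrite -mulr_sumr (cross q01) mulrCA.
Qed.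
Lemma final_ineq (R : realType) (H I W : R) :
  0 <= W -> 4 * W <= I ->
  (forall q, 0 < q < 1 -> H <= (1 - q) * I + (2 * q - 1) * (ln q - ln (1 - q)) * W) ->
  H <= 2 * Num.sqrt (W * I) - 2 * W.
Proof.
move=> W0 WI Hq.
have [W00|Wpos] := eqVneq W 0.
  rewrite W00 mul0r sqrtr0 !mulr0 subr0.
  rewrite leNgt; apply/negP => Hp.
  have I0 : 0 <= I by lra.
  set t := H / (H + I + 1).
  have D0 : 0 < H + I + 1 by lra.
  have t0 : 0 < t by rewrite divr_gt0.
  have t1 : t < 1 by rewrite ltr_pdivrMr // mul1r; lra.
  have h : H <= (1 - (1 - t)) * I + (2 * (1 - t) - 1) * (ln (1 - t) - ln (1 - (1 - t))) * W.
    by apply: Hq; apply/andP; split; lra.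
  have e1 : 1 - (1 - t) = t by ring.
  rewrite e1 W00 mulr0 addr0 in h.
  have tI : t * I < H.
    rewrite /t mulrAC ltr_pdivrMr // ; nra.
  lra.
have Wp : 0 < W by rewrite lt_def Wpos W0.
have Ip : 0 < I by lra.
set s := Num.sqrt (W * I).
have s0 : 0 < s by rewrite sqrtr_gt0 mulr_gt0.
have ss : s * s = W * I by rewrite -expr2 sqr_sqrtr // mulr_ge0 // ltW.
have s2 : 2 * s <= I by nra.
set t := s / I.
have tI : t * I = s by rewrite /t mulfVK // gt_eqF.
have t0 : 0 < t by rewrite divr_gt0.
have th : 2 * t <= 1 by rewrite /t mulrA ler_pdivrMr // mul1r.
have Wst : W = s * t.
  apply: (mulIf (negbT (gt_eqF Ip))); rewrite -mulrA tI; lra.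
have h : H <= (1 - (1 - t)) * I + (2 * (1 - t) - 1) * (ln (1 - t) - ln (1 - (1 - t))) * W.
  by apply: Hq; apply/andP; split; lra.
have e1 : 1 - (1 - t) = t by ring.
rewrite e1 in h.
have t1 : 0 < 1 - t by lra.
have hL : (ln (1 - t) - ln t) * t <= 1 - 2 * t.
  have := ln_le_sub1 (divr_gt0 t1 t0); rewrite lnD_pos //.
  move=> hl; have := ler_wpM2r (ltW t0) hl.
  have -> : ((1 - t) / t - 1) * t = 1 - 2 * t by field; rewrite gt_eqF.
  by [].
set L := ln (1 - t) - ln t in h hL.
have e : (2 * (1 - t) - 1) * L * W = (1 - 2 * t) * (L * t) * s by rewrite Wst; ring.
rewrite e tI in h.
have h2 : (1 - 2 * t) * (L * t) * s <= (1 - 2 * t) * (1 - 2 * t) * s.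
  apply: ler_wpM2r; first exact: ltW.
  apply: ler_wpM2l => //; lra.
rewrite Wst; nra.
Qed.
Lemma ge0_nNy (R : realType) (x : \bar R) : (0 <= x)%E -> x != -oo%E.
Proof. by case: x. Qed.

Lemma flipE N (x : cube N) (i : 'I_N) : flip N x i = flipn x i.
Proof. by apply/ffunP => j; rewrite !ffunE. Qed.

Lemma flipn_ge N (x : cube N) k : (N <= k)%N -> flipn x k = x.
Proof.
move=> kN; apply/ffunP => j; rewrite ffunE.
by have -> : (val j == k) = false by apply/negbTE; rewrite neq_ltn (leq_trans (ltn_ord j) kN).
Qed.

Lemma g_ge0 (R : realType) (q : R) : 0 < q < 1 -> 0 <= (2 * q - 1) * (ln q - ln (1 - q)).
Proof.
move=> /andP[q0 q1]; have q'0 : 0 < 1 - q by lra.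
case: (lerP (1 - q) q) => h.
  apply: mulr_ge0; first lra.
  by rewrite subr_ge0 ler_ln // posrE.
apply: mulr_le0; first lra.
by rewrite subr_le0 ler_ln ?posrE // ltW.
Qed.

Theorem mainTheorem1 (R : realType) (N : nat) (nu : cube N -> R) :
  (0 < N)%N ->
  is_prob R N nu ->
  ((4 * W1 R N nu (unif R N))%:E <= fisherI R N nu)%E ->
  forall I : R, fisherI R N nu = I%:E ->
  relH R N nu <= 2 * Num.sqrt (W1 R N nu (unif R N) * I) - 2 * W1 R N nu (unif R N).
Proof.
move=> N0 [nu0 nu1] hW I hI.
set m : R := (2 ^+ N)^-1.
have um : forall x, unif R N x = m by [].
have m0 : 0 < m by rewrite invr_gt0 exprn_gt0.
set rho := dens R N nu.
have rhoE : forall x, rho x = nu x / m by [].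
have nuE : forall x, nu x = m * rho x.
  by move=> x; rewrite rhoE mulrC divfK // lt0r_neq0.
have rho0 : forall x, 0 <= rho x by move=> x; rewrite rhoE divr_ge0 // ltW.
have rp : forall x, 0 < rho x.
  move=> x0; rewrite lt_def rho0 andbT; apply/negP => /eqP r0.
  case: (pselect (exists x i, (rho (flip N x i) == 0) != (rho x == 0))) => [[x [i hxi]]|hno].
    have tge0 : forall x' i', (0 <= fterm R (dens R N nu (flip N x' i')) (dens R N nu x') * (unif R N x')%:E)%E.
      move=> x' i'; apply: mule_ge0; last by rewrite lee_fin ltW.
      rewrite /fterm; case: ifP => // _; case: ifP => // /negbT.
      rewrite negb_or => /andP[h1 h2].
      rewrite lee_fin; apply: Phi_ge0; rewrite lt_def ?h1 ?h2 rho0 //.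
    have : fisherI R N nu = +oo%E.
      rewrite /fisherI.
      have -> : (\sum_x \sum_(i < N) (fterm R (dens R N nu (flip N x i)) (dens R N nu x) * (unif R N x)%:E) = +oo)%E.
        apply/esum_eqyP.
          by move=> x' _; apply: ge0_nNy; apply: sume_ge0 => i' _; apply: tge0.
        exists x; split => //.
        apply/esum_eqyP.
          by move=> i' _; apply: ge0_nNy; apply: tge0.
        exists i; split => //.
        rewrite /fterm -/rho.
        have -> : ((rho (flip N x i) == 0) && (rho x == 0)) = false.
          by move: hxi; case: (rho (flip N x i) == 0); case: (rho x == 0).
        have -> : ((rho (flip N x i) == 0) || (rho x == 0)) = true.
          by move: hxi; case: (rho (flip N x i) == 0); case: (rho x == 0).
        by rewrite gt0_mulye // lte_fin.
      by rewrite gt0_muley // lte_fin invr_gt0.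
    by rewrite hI.
  have hP : forall x k, (rho (flipn x k) == 0) = (rho x == 0).
    move=> x k; case: (ltnP k N) => kN; last by rewrite flipn_ge.
    have := hno; move/forallNP => /(_ x) /forallNP /(_ (Ordinal kN)) /negP.
    by rewrite negbK flipE => /eqP.
  have all0 : forall y, rho y = 0.
    by move=> y; apply/eqP; rewrite -(const_flip (fun x => rho x == 0) hP x0 y) r0.
  move: nu1; rewrite big1 => [|y _]; last by rewrite nuE all0 mulr0.
  by move/eqP; rewrite eq_sym oner_eq0.
have fpos : forall x i, fterm R (dens R N nu (flip N x i)) (dens R N nu x) =
    (Phi (rho (flipn x i)) (rho x))%:E.
  move=> x i; rewrite /fterm -/rho flipE !gt_eqF //.
have Ieq : I = m * \sum_(i < N) Fi i rho.
  move: hI; rewrite /fisherI.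
  under eq_bigr do under eq_bigr do rewrite fpos um -EFinM.
  under eq_bigr do rewrite sumEFin.
  rewrite sumEFin -EFinM => -[<-].
  rewrite exchange_big !mulr_sumr; apply: eq_bigr => i _.
  by rewrite /Fi -!mulr_suml; ring.
have Heq : relH R N nu = m * Ent rho.
  rewrite /relH /Ent mulr_sumr; apply: eq_bigr => x _.
  by rewrite -/rho gt_eqF // um mulrC.
set W := W1 R N nu (unif R N).
set S := [set c : R | exists pi, coupling R N nu (unif R N) pi /\
        c = \sum_(p : cube N * cube N) pi p * (hamming N p.1 p.2)%:R]%classic.
have cost0 : forall c, S c -> 0 <= c.
  move=> c [pi [[pp _] ->]]; apply: sumr_ge0 => p _; by rewrite mulr_ge0.
have Sne : S (\sum_(p : cube N * cube N) (nu p.1 * m) * (hamming N p.1 p.2)%:R).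
  exists (fun p => nu p.1 * m); split => //; split; first by move=> p; rewrite mulr_ge0 // ltW.
  have cs : \sum_(y : cube N) m = 1.
    rewrite sumr_const card_ffun card_bool card_ord -mulr_natr natrX mulVf // expf_neq0 // pnatr_eq0.
  split => [x|y] /=; first by rewrite -mulr_sumr cs mulr1.
  by rewrite -mulr_suml nu1 mul1r.
have Sne0 : (S !=set0)%classic by exact: (ex_intro _ _ Sne).
have W0 : 0 <= W.
  by apply: lb_le_inf; [exact: Sne0 | move=> c /cost0].
have Wb : forall q, 0 < q < 1 -> relH R N nu <= (1 - q) * I + (2 * q - 1) * (ln q - ln (1 - q)) * W.
  move=> q q01.
  have c1 := Ent_chain q01 rho rp N.
  have hm : m * Ent rho <= (1 - q) * I + m * Ent (Fseq q rho N).
    have := ler_wpM2l (ltW m0) c1; rewrite mulrDr Ieq.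
    by have -> : m * ((1 - q) * \sum_(i < N) Fi i rho) = (1 - q) * (m * \sum_(i < N) Fi i rho) by ring.
  have hc : forall c, S c -> m * Ent (Fseq q rho N) <= (2 * q - 1) * (ln q - ln (1 - q)) * c.
    move=> c [pi [[pp [h1 h2]] ->]].
    apply: W_part => //.
    by move=> x; rewrite h1 nuE.
  rewrite Heq; set g := (2 * q - 1) * (ln q - ln (1 - q)).
  have g0 : 0 <= g := @g_ge0 R q q01.
  have [g00|gpos] := eqVneq g 0.
    have h := hc _ Sne; rewrite -/g g00 mul0r in h; rewrite g00 mul0r addr0.
    by apply: (le_trans hm); rewrite -[X in _ <= X]addr0 lerD2l.
  have gp : 0 < g by rewrite lt_def gpos g0.
  have : (m * Ent (Fseq q rho N)) / g <= W.
    apply: lb_le_inf; first exact: Sne0.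
    by move=> c Sc; rewrite ler_pdivrMr // [c * g]mulrC; exact: hc.
  rewrite ler_pdivrMr // => h.
  by apply: (le_trans hm); rewrite lerD2l [g * W]mulrC.
apply: final_ineq => //.
by move: hW; rewrite hI lee_fin.
Qed.
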